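(* For $u=(u_1,\dots,u_n)$ and $v=(v_1,\dots,v_n)$, \begin{multline*} \sum_{w\in\mathfrak S_u\times\mathfrak S_v}w\biggl(\prod_{i=1}^n\frac{1}{u_i-tv_i}\prod_{1\le i<j\le n}\frac{u_i-tu_j}{u_i-u_j}\cdot\frac{u_i-v_j}{u_i-tv_j}\cdot\frac{v_i-tv_j}{v_i-v_j}\biggr)\\ =\frac{(t;t)_n}{(1-t)^n}\sum_{w\in\mathfrak S_v}w\biggl(\prod_{i=1}^n\frac{1}{u_i-tv_i}\prod_{1\le i<j\le n}\frac{u_i-v_j}{u_i-tv_j}\cdot\frac{v_i-tv_j}{v_i-v_j}\biggr). \end{multline*}
   Context: $\mathfrak S_u$ (resp. $\mathfrak S_v$) is the symmetric group acting by permuting the variables $u_1,\dots,u_n$ (resp. $v_1,\dots,v_n$), and $\mathfrak S_u\times\mathfrak S_v$ permutes both sets independently; $w(f)$ denotes the function obtained by permuting variables. $(t;t)_n=(1-t)(1-t^2)\cdots(1-t^n)$. *)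

(* Defs.v *)
From HB Require Import structures.
From mathcomp Require Import all_boot all_order all_algebra all_fingroup.
Set Implicit Arguments. Unset Strict Implicit. Unset Printing Implicit Defensive.
Import Order.TTheory GRing.Theory Num.Theory.
Local Open Scope ring_scope.

Definition qpoch (R : ringType) (t : R) (n : nat) : R :=
  \prod_(i < n) (1 - t ^+ i.+1).

Definition lhs_fun (R : fieldType) (n : nat) (t : R) (u v : 'I_n -> R) : R :=
  (\prod_(i < n) (u i - t * v i)^-1) *
  \prod_(i < n) \prod_(j < n | (i < j)%N)
     ((u i - t * u j) / (u i - u j) *
      ((u i - v j) / (u i - t * v j)) *
      ((v i - t * v j) / (v i - v j))).

Definition rhs_fun (R : fieldType) (n : nat) (t : R) (u v : 'I_n -> R) : R :=
  (\prod_(i < n) (u i - t * v i)^-1) *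
  \prod_(i < n) \prod_(j < n | (i < j)%N)
     (((u i - v j) / (u i - t * v j)) *
      ((v i - t * v j) / (v i - v j))).

(* Main.v *)
Require Import Defs.
From HB Require Import structures.
From mathcomp Require Import all_boot all_order all_algebra all_fingroup.
From mathcomp Require Import ring.
Set Implicit Arguments. Unset Strict Implicit. Unset Printing Implicit Defensive.
Import Order.TTheory GRing.Theory Num.Theory.
Local Open Scope ring_scope.

Ltac fld := field; repeat (apply/andP; split); try assumption.

Section L.
Variable R : fieldType.

Fixpoint PLd (d : R -> R -> R) (k : R -> R -> R -> R) (U W : seq R) : R :=
  match U, W with
  | a :: U', w :: W' => d a w * (\prod_(z <- W') k a w z) * PLd d k U' W'
  | _, _ => 1
  end.

Lemma prod_lift0 n (F : 'I_n.+1 -> R) :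
  \prod_(j < n.+1 | (0 < j)%N) F j = \prod_(i < n) F (lift ord0 i).
Proof.
rewrite big_mkcond big_ord_recl ltnn Monoid.mul1m.
by apply: eq_bigr.
Qed.

Lemma prod_liftS n (F : 'I_n.+1 -> R) (i : 'I_n) :
  \prod_(j < n.+1 | (lift ord0 i < j)%N) F j = \prod_(j < n | (i < j)%N) F (lift ord0 j).
Proof.
rewrite big_mkcond big_ord_recl ltn0 Monoid.mul1m [RHS]big_mkcond.
by apply: eq_bigr => j _; rewrite !lift0 ltnS.
Qed.

Lemma prod_map_enum n (f : 'I_n -> R) (g : R -> R) :
  \prod_(z <- map f (enum 'I_n)) g z = \prod_(i < n) g (f i).
Proof. by rewrite big_map big_enum. Qed.

Lemma ord_to_list n (x y : 'I_n -> R) d k :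
  (\prod_(i < n) d (x i) (y i)) *
  (\prod_(i < n) \prod_(j < n | (i < j)%N) k (x i) (y i) (y j))
  = PLd d k (map x (enum 'I_n)) (map y (enum 'I_n)).
Proof.
elim: n x y => [|n IH] x y.
  by rewrite !big_ord0 enum_ord0 /= mulr1.
have Ex : forall f : 'I_n.+1 -> R, map f (enum 'I_n.+1) = f ord0 :: map (f \o lift ord0) (enum 'I_n).
  by move=> f; rewrite enum_ordSl /= map_comp.
rewrite !Ex [PLd _ _ _ _]/=.
rewrite -(IH (x \o lift ord0) (y \o lift ord0)).
rewrite !big_ord_recl prod_map_enum prod_lift0.
have -> : \prod_(i < n) \prod_(j < n.+1 | (lift ord0 i < j)%N) k (x (lift ord0 i)) (y (lift ord0 i)) (y j)
  = \prod_(i < n) \prod_(j < n | (i < j)%N) k (x (lift ord0 i)) (y (lift ord0 i)) (y (lift ord0 j)).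
  by apply: eq_bigr => i _; rewrite prod_liftS.
rewrite /comp; ring.
Qed.
Lemma sum_perm_list n (v : 'I_n -> R) (F : seq R -> R) : injective v ->
  \sum_(s : 'S_n) F (map (fun i => v (s i)) (enum 'I_n))
  = \sum_(W <- permutations (map v (enum 'I_n))) F W.
Proof.
move=> iv.
rewrite -(big_map (fun s : 'S_n => map (fun i => v (s i)) (enum 'I_n)) xpredT F).
apply: perm_big; apply: uniq_perm.
- rewrite map_inj_uniq ?index_enum_uniq // => s1 s2 /eq_in_map E.
  by apply/permP => i; apply: iv; apply: E; rewrite mem_enum.
- exact: permutations_uniq.
move=> W; rewrite mem_permutations; apply/idP/idP.
  case/mapP => s _ ->; rewrite (map_comp v s) perm_map //.
  apply: uniq_perm; rewrite ?enum_uniq //.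
    by rewrite map_inj_uniq ?enum_uniq //; apply: perm_inj.
  move=> i; rewrite mem_enum; apply/mapP; exists (s^-1 i)%g; first by rewrite mem_enum.
  by rewrite permKV.
have -> : map v (enum 'I_n) = [tuple v i | i < n] :> seq R by [].
case/tuple_permP => p ->; apply/mapP; exists p; first by rewrite mem_index_enum.
by apply: eq_map => i; rewrite tnth_mktuple.
Qed.

Lemma sum_perms_cons (F : seq R -> R) V : uniq V -> (0 < size V)%N ->
  \sum_(W <- permutations V) F W
  = \sum_(x <- V) \sum_(W <- permutations (filter (predC1 x) V)) F (x :: W).
Proof.
move=> uV szV.
rewrite (perm_big _ (permutationsE szV)) big_allpairs_dep undup_id //.
by apply: eq_big_seq => x xV; rewrite rem_filter.
Qed.

Lemma antisym_sum (V : seq R) (g : R -> R -> R) :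
  (forall x y, x \in V -> y \in V -> x != y -> g y x = - g x y) ->
  \sum_(x <- V) \sum_(y <- V | y != x) g x y = 0.
Proof.
move=> hg.
have E1 : \sum_(x <- V) \sum_(y <- V | y != x) g x y =
  \sum_(x <- V) \sum_(y <- V | y != x) (g x y * (x / (x - y)) + g x y * (y / (y - x))).
  apply: eq_bigr => x _; apply: eq_bigr => y yx.
  have h1 : x - y != 0 by rewrite subr_eq0 eq_sym.
  have h2 : y - x != 0 by rewrite subr_eq0.
  by field; rewrite h1 h2.
rewrite E1.
under eq_bigr do rewrite big_split.
rewrite big_split /= (exchange_big_dep xpredT) //=.
apply/eqP; rewrite addr_eq0; apply/eqP; rewrite -sumrN.
apply: eq_big_seq => x xV; rewrite -sumrN.
rewrite big_seq_cond [RHS]big_seq_cond; apply: eq_big => y.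
  by rewrite eq_sym.
move=> /andP[yV yx]; rewrite hg ?mulNr //.
Qed.

Variable t : R.

Definition dG a w := (a - t * w)^-1.
Definition kG a w z := (a - z) / (a - t * z) * ((w - t * z) / (w - z)).
Definition Gd U W := PLd dG kG U W.
Definition H U V := \sum_(W <- permutations V) Gd U W.
Definition cG a x V' := dG a x * \prod_(z <- V') kG a x z.

Lemma H_cons a U V : uniq V -> (0 < size V)%N ->
  H (a :: U) V = \sum_(x <- V) cG a x (filter (predC1 x) V) * H U (filter (predC1 x) V).
Proof.
move=> uV szV; rewrite /H sum_perms_cons //; apply: eq_bigr => x _.
rewrite mulr_sumr; apply: eq_big_seq => W; rewrite mem_permutations => pW.
rewrite /Gd [PLd _ _ (a :: U) _]/= /cG.
by congr (_ * _ * _); apply: perm_big.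
Qed.

Lemma H_perm U V V' : perm_eq V V' -> H U V = H U V'.
Proof. by move=> p; apply: perm_big; apply: perm_permutations. Qed.

Lemma local_id a b x y : a - t * x != 0 -> a - t * y != 0 -> b - t * x != 0 ->
  b - t * y != 0 -> x - y != 0 -> y - x != 0 ->
  dG a y * kG a y x * dG b x - dG b y * kG b y x * dG a x
  = - (dG a x * kG a x y * dG b y - dG b x * kG b x y * dG a y).
Proof. by move=> *; rewrite /dG /kG; fld. Qed.

Lemma H_swap a b Z V : uniq V -> (1 < size V)%N ->
  (forall x, x \in V -> (a - t * x != 0) && (b - t * x != 0)) ->
  H (a :: b :: Z) V = H (b :: a :: Z) V.
Proof.
move=> uV szV hab.
have szV0 : (0 < size V)%N by apply: ltnW.
have hf : forall x, x \in V -> uniq (filter (predC1 x) V) /\ (0 < size (filter (predC1 x) V))%N.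
  move=> x xV; split; first exact: filter_uniq.
  by rewrite -rem_filter // size_rem //; case: (size V) szV => [|[|m]].
pose W x y := filter (predI (predC1 y) (predC1 x)) V.
pose T c d x y := cG c x (filter (predC1 x) V) * (cG d y (W x y) * H Z (W x y)).
have step : forall c d, H (c :: d :: Z) V = \sum_(x <- V) \sum_(y <- V | y != x) T c d x y.
  move=> c d; rewrite H_cons //; apply: eq_big_seq => x xV.
  have [uf sf] := hf x xV.
  rewrite H_cons // mulr_sumr big_filter.
  by apply: eq_bigr => y _; rewrite /T /W filter_predI.
have TE : forall c d x y, x \in V -> y \in V -> x != y -> T c d x y =
   dG c x * kG c x y * dG d y *
   ((\prod_(z <- W x y) ((c - z) / (c - t * z))) * (\prod_(z <- W x y) ((d - z) / (d - t * z))) *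
    (\prod_(z <- W x y) ((x - t * z) / (x - z))) * (\prod_(z <- W x y) ((y - t * z) / (y - z))) *
    H Z (W x y)).
  move=> c d x y xV yV xy.
  have [uf sf] := hf x xV.
  rewrite /T /cG (bigD1_seq y) //; last by rewrite mem_filter /= eq_sym xy.
  have -> : \prod_(i <- filter (predC1 x) V | i != y) kG c x i = \prod_(z <- W x y) kG c x z.
    by rewrite /W filter_predI big_filter.
  rewrite /kG !big_split /=; ring.
have Wsym : forall x y, W y x = W x y.
  by move=> x y; rewrite /W; apply: eq_filter => z; rewrite /= andbC.
rewrite !step; apply/eqP; rewrite -subr_eq0 -sumrB; apply/eqP.
under eq_bigr do rewrite -sumrB.
apply: antisym_sum => x y xV yV xy.
rewrite !TE // ?(eq_sym y) // (Wsym x y).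
have /andP[hax hbx] := hab x xV.
have /andP[hay hby] := hab y yV.
have hxy : x - y != 0 by rewrite subr_eq0.
have hyx : y - x != 0 by rewrite subr_eq0 eq_sym.
have L := local_id hax hay hbx hby hxy hyx.
set C := (\prod_(z <- W x y) ((a - z) / (a - t * z))) * (\prod_(z <- W x y) ((b - z) / (b - t * z))) *
    (\prod_(z <- W x y) ((x - t * z) / (x - z))) * (\prod_(z <- W x y) ((y - t * z) / (y - z))) *
    H Z (W x y).
transitivity ((dG a y * kG a y x * dG b x - dG b y * kG b y x * dG a x) * C).
  rewrite /C; ring.
rewrite L /C; ring.
Qed.

Lemma H_sym n : forall U1 U2 V : seq R, size U1 = n -> perm_eq U1 U2 -> uniq U1 -> uniq V ->
  size V = n -> (forall a x, a \in U1 -> x \in V -> a - t * x != 0) -> H U1 V = H U2 V.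
Proof.
elim: n => [|n IH] U1 U2 V sU pU uU uV sV hc.
  move/perm_size: (pU); case: U1 sU pU {uU hc} => // _; case: U2 => //.
have sV0 : (0 < size V)%N by rewrite sV.
have same : forall c X Y, size X = n -> perm_eq X Y -> uniq (c :: X) ->
    (forall a x, a \in c :: X -> x \in V -> a - t * x != 0) -> H (c :: X) V = H (c :: Y) V.
  move=> c X Y sX pXY uX hX; rewrite !H_cons //; apply: eq_big_seq => w wV.
  congr (_ * _); apply: IH => //.
  - by case/andP: uX.
  - exact: filter_uniq.
  - by rewrite -rem_filter // size_rem // sV.
  move=> a x aX; rewrite mem_filter => /andP[_ xV]; apply: hX => //.
  by rewrite inE aX orbT.
case: U1 sU pU uU hc => // x X [sX] pU uU hc.
case: U2 pU => [/perm_size //|y Y pU].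
case: (x =P y) => [exy|nxy].
  by rewrite -exy in pU *; apply: same => //; rewrite -(perm_cons x).
have yX : y \in X.
  have : y \in x :: X by rewrite (perm_mem pU) inE eqxx.
  by rewrite inE eq_sym (negbTE (introN eqP nxy)).
set Zl := rem y X.
have pX : perm_eq X (y :: Zl) := perm_to_rem yX.
have pxy : perm_eq (x :: y :: Zl) (y :: x :: Zl) := permEl (perm_catCA [:: x] [:: y] Zl).
have pY : perm_eq (x :: Zl) Y.
  rewrite -(perm_cons y) -(permPl pxy).
  by rewrite -(permPr pU) perm_cons perm_sym.
have pxX : perm_eq (x :: X) (x :: y :: Zl) by rewrite perm_cons.
have sZ : size Zl = n.-1 by rewrite /Zl size_rem // sX.
have n0 : (0 < n)%N by rewrite -sX; case: (X) yX.
have mem1 : forall a, a \in y :: x :: Zl -> a \in x :: X.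
  by move=> a; rewrite (perm_mem pxX) (perm_mem pxy).
transitivity (H (x :: y :: Zl) V); first by apply: same.
transitivity (H (y :: x :: Zl) V).
  apply: H_swap => //; first by rewrite sV ltnS.
  move=> w wV; apply/andP; split; apply: hc => //; first by rewrite inE eqxx.
  by rewrite inE yX orbT.
apply: same => //.
- by rewrite /= sZ prednK.
- by rewrite -(perm_uniq pxy) -(perm_uniq pxX).
by move=> a w ha; apply: hc; apply: mem1.
Qed.

Definition kA (a w z : R) := (w - t * z) / (w - z).
Definition Al W := PLd (fun _ _ => 1) kA W W.
Definition M U := \sum_(W <- permutations U) Al W.
Definition ea U x := \prod_(z <- U | z != x) ((x - t * z) / (x - z)).
Definition EE U := \sum_(x <- U) ea U x.
Definition gg U y := \prod_(z <- U) ((y - t * z) / (y - z)).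
Definition SS U y := \sum_(x <- U) ea U x / (y - x).

Lemma ea_head b U : b \notin U -> ea (b :: U) b = gg U b.
Proof.
move=> bU; rewrite /ea big_cons eqxx /= /gg big_seq_cond [RHS]big_seq_cond.
apply: eq_bigl => z; case zU: (z \in U) => //=.
by apply/eqP => zb; rewrite -zb zU in bU.
Qed.

Lemma ea_tail b U x : b \notin U -> x \in U -> ea (b :: U) x = (x - t * b) / (x - b) * ea U x.
Proof.
move=> bU xU; rewrite /ea big_cons.
have -> : (b != x) = true by apply/eqP => bx; rewrite bx xU in bU.
by [].
Qed.

Lemma sum4 b U : b \notin U ->
  \sum_(x <- U) (x - t * b) / (x - b) * ea U x = EE U - (1 - t) * b * SS U b.
Proof.
move=> bU; rewrite /EE /SS mulr_sumr -sumrB; apply: eq_big_seq => x xU.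
have h1 : x - b != 0 by rewrite subr_eq0; apply: contraNneq bU => <-.
have h2 : b - x != 0 by rewrite subr_eq0 eq_sym -subr_eq0.
by fld.
Qed.

Lemma sum5 b U y : b \notin U -> y \notin U -> y != b ->
  \sum_(x <- U) (x - t * b) / (x - b) * ea U x / (y - x)
  = (y - t * b) / (y - b) * SS U y - (1 - t) * b / (y - b) * SS U b.
Proof.
move=> bU yU yb; rewrite /SS !mulr_sumr -sumrB; apply: eq_big_seq => x xU.
have h1 : x - b != 0 by rewrite subr_eq0; apply: contraNneq bU => <-.
have h2 : b - x != 0 by rewrite subr_eq0 eq_sym -subr_eq0.
have h3 : y - x != 0 by rewrite subr_eq0; apply: contraNneq yU => ->.
have h4 : y - b != 0 by rewrite subr_eq0.
by fld.
Qed.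

Lemma EE_cons_raw b U : b \notin U ->
  EE (b :: U) = gg U b + (EE U - (1 - t) * b * SS U b).
Proof.
move=> bU; rewrite {1}/EE big_cons ea_head // -sum4 //; congr (_ + _).
by apply: eq_big_seq => x xU; rewrite ea_tail.
Qed.

Lemma SS_cons_raw b U y : b \notin U -> y \notin U -> y != b ->
  SS (b :: U) y = gg U b / (y - b) +
    ((y - t * b) / (y - b) * SS U y - (1 - t) * b / (y - b) * SS U b).
Proof.
move=> bU yU yb; rewrite {1}/SS big_cons ea_head // -sum5 //; congr (_ + _).
by apply: eq_big_seq => x xU; rewrite ea_tail.
Qed.

Lemma PF U : uniq U -> forall y, y \notin U ->
  gg U y = 1 - (1 - t) * EE U + (1 - t) * y * SS U y.
Proof.
elim: U => [|b U IH] /=.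
  by move=> _ y _; rewrite /gg /EE /SS !big_nil; ring.
move=> /andP[bU uU] y; rewrite inE negb_or => /andP[yb yU].
rewrite EE_cons_raw // SS_cons_raw //.
have -> : gg (b :: U) y = (y - t * b) / (y - b) * gg U y by rewrite /gg big_cons.
rewrite (IH uU y yU) (IH uU b bU).
have h : y - b != 0 by rewrite subr_eq0.
by fld.
Qed.

Lemma EE_cons b U : uniq (b :: U) -> EE (b :: U) = 1 + t * EE U.
Proof.
case/andP => bU uU; rewrite EE_cons_raw // (PF uU bU); ring.
Qed.

Lemma EE_val U : uniq U -> EE U = \sum_(i < size U) t ^+ i.
Proof.
elim: U => [|b U IH] uU; first by rewrite /EE big_nil big_ord0.
rewrite EE_cons // IH; last by case/andP: uU.
by rewrite big_ord_recl expr0 mulr_sumr; congr (_ + _); apply: eq_bigr => i _; rewrite exprS.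
Qed.

Lemma M_cons U : uniq U -> (0 < size U)%N ->
  M U = \sum_(x <- U) ea U x * M (filter (predC1 x) U).
Proof.
move=> uU sU; rewrite /M sum_perms_cons //; apply: eq_bigr => x _.
rewrite mulr_sumr; apply: eq_big_seq => W; rewrite mem_permutations => pW.
rewrite /Al [PLd _ _ (x :: W) _]/= mul1r /ea -(big_filter U (predC1 x)); congr (_ * _).
exact: perm_big.
Qed.

Lemma M_val n : forall U, uniq U -> size U = n ->
  M U = \prod_(k < n) \sum_(i < k.+1) t ^+ i.
Proof.
elim: n => [|n IH] U uU sU.
  by case: U sU uU => // _ _; rewrite big_ord0 /M big_seq1.
rewrite M_cons ?sU //.
have -> : \sum_(x <- U) ea U x * M (filter (predC1 x) U)
   = \sum_(x <- U) ea U x * \prod_(k < n) \sum_(i < k.+1) t ^+ i.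
  apply: eq_big_seq => x xU; rewrite (IH _ (filter_uniq _ uU)) //.
  by rewrite -rem_filter // size_rem // sU.
by rewrite -mulr_suml -/(EE U) EE_val // sU [RHS]big_ord_recr mulrC.
Qed.

Lemma qpoch_val n : qpoch t n = (1 - t) ^+ n * \prod_(k < n) \sum_(i < k.+1) t ^+ i.
Proof.
have -> : (1 - t) ^+ n = \prod_(k < n) (1 - t) by rewrite prodr_const card_ord.
rewrite /qpoch -big_split /=.
apply: eq_bigr => k _.
by rewrite -opprB subrX1 -mulNr opprB.
Qed.

Lemma perm_map_perm n (u : 'I_n -> R) (s : 'S_n) :
  perm_eq (map (fun i => u (s i)) (enum 'I_n)) (map u (enum 'I_n)).
Proof.
rewrite (map_comp u s) perm_map //.
apply: uniq_perm; rewrite ?enum_uniq //.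
  by rewrite map_inj_uniq ?enum_uniq //; apply: perm_inj.
move=> i; rewrite mem_enum; apply/mapP; exists (s^-1 i)%g; first by rewrite mem_enum.
by rewrite permKV.
Qed.

End L.

Theorem lemma3p8 (R : fieldType) (n : nat) (t : R) (u v : 'I_n -> R)
  (ht : t != 1)
  (hu : injective u) (hv : injective v)
  (huv : forall a b : 'I_n, u a != t * v b) :
  \sum_(s : 'S_n) \sum_(s' : 'S_n) lhs_fun t (fun i => u (s i)) (fun i => v (s' i))
  = qpoch t n / (1 - t) ^+ n *
    \sum_(s' : 'S_n) rhs_fun t u (fun i => v (s' i)).
Proof.
set U := map u (enum 'I_n).
set V := map v (enum 'I_n).
have Elhs : forall (x y : 'I_n -> R), lhs_fun t x y =
    Al t (map x (enum 'I_n)) * Gd t (map x (enum 'I_n)) (map y (enum 'I_n)).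
  move=> x y; rewrite /lhs_fun /Al /Gd -!ord_to_list big1_eq mul1r.
  rewrite mulrCA; congr (_ * _).
  rewrite -big_split; apply: eq_bigr => i _; rewrite -big_split; apply: eq_bigr => j _.
  by rewrite /kA /kG /=; ring.
have Erhs : forall y : 'I_n -> R, rhs_fun t u y = Gd t U (map y (enum 'I_n)).
  by move=> y; rewrite /Gd -ord_to_list.
have uV : uniq V by rewrite map_inj_uniq ?enum_uniq.
have uU : uniq U by rewrite map_inj_uniq ?enum_uniq.
have sU : size U = n by rewrite size_map size_enum_ord.
have S1 : forall s : 'S_n,
    \sum_(s' : 'S_n) lhs_fun t (fun i => u (s i)) (fun i => v (s' i))
    = Al t (map (fun i => u (s i)) (enum 'I_n)) * H t U V.
  move=> s; under eq_bigr do rewrite Elhs.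
  rewrite -mulr_sumr (sum_perm_list (Gd t (map (fun i => u (s i)) (enum 'I_n))) hv).
  congr (_ * _); apply: (@H_sym R t n).
  - by rewrite size_map size_enum_ord.
  - exact: perm_map_perm.
  - by rewrite map_inj_uniq ?enum_uniq //; apply: inj_comp hu (@perm_inj _ s).
  - exact: uV.
  - by rewrite size_map size_enum_ord.
  move=> a x /mapP[i _ ->] /mapP[j _ ->]; rewrite subr_eq0; exact: huv.
under eq_bigr do rewrite S1.
rewrite -mulr_suml (sum_perm_list (Al t) hu) -/(M t U) (@M_val _ t n U uU sU).
under [in RHS]eq_bigr do rewrite Erhs.
rewrite (sum_perm_list (Gd t U) hv) -/(H t U V) qpoch_val.
have h1 : (1 - t) ^+ n != 0 by rewrite expf_neq0 // subr_eq0 eq_sym.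
by rewrite [_ * _ / _]mulrC mulKf.
Qed.
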